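(* Let $Q=(q_1,\ldots,q_k)$ be an instance of the FIFO stack-up problem and $p$ a positive integer. If the sequence graph $G_Q$ has a directed path-decomposition of width $p-1$, then there is a processing of $Q$ with $p$ stack-up places, i.e. a processing in which every configuration has at most $p$ open pallets.
   Context: A bin $b$ carries a pallet symbol $\mathit{plt}(b)$ (a positive integer). An instance is a list $Q=(q_1,\ldots,q_k)$ of finite sequences of bins, all bins pairwise distinct; it is assumed that for every pallet symbol occurring, the sequences together contain at least two bins destined for it. $\mathit{plts}(Q)$ is the set of pallet symbols occurring in $Q$. A subsequence of $q=(b_1,\ldots,b_n)$ is a suffix $q'=(b_j,\ldots,b_n)$ (possibly empty), and $q-q'=(b_1,\ldots,b_{j-1})$. A configuration is a pair $(Q,Q')$ with $Q'=(q'_1,\ldots,q'_k)$, each $q'_j$ a subsequence of $q_j$. A pallet $t$ is open in $(Q,Q')$ if some bin for $t$ lies in some $q'_i$ and some bin for $t$ lies in some $q_j-q'_j$. A transformation step removes the first bin of one nonempty $q'_i$. A processing of $Q$ is a sequence of transformation steps transforming $(Q,Q)$ into the configuration where all $k$ sequences are empty. The sequence graph $G_Q$ has vertex set $\mathit{plts}(Q)$ and an arc $(u,v)$ iff $u\ne v$ and some sequence $q_i$ contains a bin for $u$ at a position strictly before a bin for $v$. A directed path-decomposition of a digraph $G=(V,E)$ is a sequence $(X_1,\ldots,X_r)$ of subsets of $V$ with: (1) $\bigcup_i X_i=V$; (2) for every arc $(u,v)$ there are $i\le j$ with $u\in X_i$, $v\in X_j$; (3) if $u\in X_i\cap X_j$,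 $i\le j$, then $u\in X_l$ for all $i\le l\le j$. Its width is $\max_i|X_i|-1$. *)

(* Defs.v *)
From mathcomp Require Import all_boot.
Set Implicit Arguments. Unset Strict Implicit. Unset Printing Implicit Defensive.

Section FIFO.
Variables (T : eqType) (plt : T -> nat).

Definition instance (Q : seq (seq T)) : Prop :=
  [/\ uniq (flatten Q),
      (forall b, b \in flatten Q -> 0 < plt b) &
      (forall b, b \in flatten Q ->
         1 < count (fun b' => plt b' == plt b) (flatten Q))].

Definition plts (Q : seq (seq T)) : seq nat := undup (map plt (flatten Q)).

(* A configuration (Q,Q') is represented by Q' (aligned with Q);
   q_j - q'_j = take (size q_j - size q'_j) q_j. *)
Definition removed (q q' : seq T) : seq T := take (size q - size q') q.

Definition open_pallet (Q C : seq (seq T)) (t : nat) : bool :=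
  has (fun q' => has (fun b => plt b == t) q') C &&
  has (fun qq => has (fun b => plt b == t) (removed qq.1 qq.2)) (zip Q C).

Definition open_pallets (Q C : seq (seq T)) : seq nat :=
  [seq t <- plts Q | open_pallet Q C t].

Definition step (C C' : seq (seq T)) : bool :=
  has (fun i => (nth [::] C i != [::]) &&
                (C' == set_nth [::] C i (behead (nth [::] C i))))
      (iota 0 (size C)).

Definition processing (Q : seq (seq T)) (cs : seq (seq (seq T))) : bool :=
  path step Q cs && (last Q cs == nseq (size Q) [::]).

Definition sg_arc (Q : seq (seq T)) (u v : nat) : bool :=
  (u != v) &&
  has (fun q => has (fun n => (u \in map plt (take n q)) &&
                              (v \in map plt (drop n q)))
                    (iota 0 (size q).+1)) Q.

End FIFO.

Definition dir_path_decomp (V : seq nat) (E : nat -> nat -> bool)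
    (X : seq (seq nat)) : Prop :=
  [/\ (forall i, i < size X -> {subset nth [::] X i <= V}),
      (forall v, v \in V -> exists2 i, i < size X & v \in nth [::] X i),
      (forall u v, u \in V -> v \in V -> E u v ->
         exists i j, [/\ i <= j, j < size X, u \in nth [::] X i
                       & v \in nth [::] X j]) &
      (forall u i j l, i <= l -> l <= j -> j < size X ->
         u \in nth [::] X i -> u \in nth [::] X j -> u \in nth [::] X l)].

Definition dpd_width (X : seq (seq nat)) : nat :=
  (\max_(B <- X) size (undup B)).-1.

(* Main.v *)
Require Import Defs.
From mathcomp Require Import all_boot.
From mathcomp Require Import zify.
Set Implicit Arguments. Unset Strict Implicit. Unset Printing Implicit Defensive.

Lemma min_exists (T : eqType) (f : T -> nat) (s : seq T) :
  s != [::] -> exists2 x, x \in s & forall y, y \in s -> f x <= f y.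
Proof.
elim: s => [//|a s IH] _.
case: (eqVneq s [::]) => [->|ne].
  by exists a => [|y]; rewrite ?mem_seq1 ?inE // => /eqP->.
have [x xs Hx] := IH ne.
case: (leqP (f a) (f x)) => h.
  exists a; first by rewrite inE eqxx.
  move=> y; rewrite inE => /orP[/eqP->//|/Hx]; lia.
exists x; first by rewrite inE xs orbT.
move=> y; rewrite inE => /orP[/eqP->|/Hx//]; lia.
Qed.

Lemma mem_zipP (A B : eqType) (s : seq A) (t : seq B) qq x0 y0 :
  size s = size t -> qq \in zip s t ->
  exists2 k, k < size s & qq = (nth x0 s k, nth y0 t k).
Proof.
move=> Hs Hq; exists (index qq (zip s t)).
  by rewrite -[size s]minnn {2}Hs -size_zip index_mem.
by rewrite -(nth_zip x0 y0 _ Hs) nth_index.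
Qed.

Lemma flatten_set_nth (T : eqType) (C : seq (seq T)) j x rest :
  j < size C -> nth [::] C j = x :: rest ->
  (size (flatten (set_nth [::] C j rest))).+1 = size (flatten C).
Proof.
elim: C j => [//|c C IH] [|j] /=.
  by move=> _ ->; rewrite !size_cat.
by move=> hj hn; rewrite !size_cat -addnS IH.
Qed.

Lemma flatten_nil (T : eqType) (C : seq (seq T)) :
  flatten C = [::] -> C = nseq (size C) [::].
Proof.
by elim: C => [//|c C IH] /=; case: c => //= /IH <-.
Qed.

Lemma removed_cat (T : eqType) (R c : seq T) : removed (R ++ c) c = R.
Proof.
by rewrite /removed size_cat addnK take_size_cat.
Qed.

Definition aidx (X : seq (seq nat)) u := find (fun B => u \in B) X.
Definition lidx (X : seq (seq nat)) u :=
  \max_(i in [pred i : 'I_(size X) | u \in nth [::] X i]) (i : nat).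

Lemma aidx_le X u i : i < size X -> u \in nth [::] X i -> aidx X u <= i.
Proof.
move=> hi hu; rewrite leqNgt; apply/negP => /(before_find [::]) /=.
by rewrite hu.
Qed.

Lemma lidx_ge X u i : i < size X -> u \in nth [::] X i -> i <= lidx X u.
Proof.
move=> hi hu.
exact: (@leq_bigmax_cond _ [pred i : 'I_(size X) | u \in nth [::] X i]
          (fun i : 'I_(size X) => (i : nat)) (Ordinal hi)).
Qed.

Lemma aidx_mem X u i : i < size X -> u \in nth [::] X i ->
  aidx X u < size X /\ u \in nth [::] X (aidx X u).
Proof.
move=> hi hu.
have hh : has (fun B => u \in B) X by apply/(has_nthP [::]); exists i.
split; first by rewrite /aidx -has_find.
exact: (nth_find [::] hh).
Qed.

Lemma lidx_mem X u i : i < size X -> u \in nth [::] X i ->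
  lidx X u < size X /\ u \in nth [::] X (lidx X u).
Proof.
move=> hi hu.
have hc : 0 < #|[pred i : 'I_(size X) | u \in nth [::] X i]|.
  by apply/card_gt0P; exists (Ordinal hi).
rewrite /lidx; have [i0 hi0 ->] := eq_bigmax_cond (fun i : 'I_(size X) => (i : nat)) hc.
by split; [exact: ltn_ord | exact: hi0].
Qed.

Definition cfg (T : eqType) (Q C : seq (seq T)) :=
  size C = size Q /\
  forall k, k < size Q -> exists R, nth [::] Q k = R ++ nth [::] C k.

Definition rem_in (T : eqType) (Q C : seq (seq T)) r :=
  has (fun qq => r \in removed qq.1 qq.2) (zip Q C).

Definition INV (T : eqType) (plt : T -> nat) X (Q C : seq (seq T)) :=
  forall r w, rem_in Q C r -> w \in flatten C ->
    aidx X (plt r) <= lidx X (plt w).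

Lemma rem_inP (T : eqType) (Q C : seq (seq T)) r : cfg Q C ->
  rem_in Q C r -> exists k R, [/\ k < size Q,
     nth [::] Q k = R ++ nth [::] C k & r \in R].
Proof.
move=> [hs hc] /hasP [qq hq hr].
move: hr; have [k hk ->] := mem_zipP [::] [::] (esym hs) hq.
have [R hR] := hc k hk.
by rewrite /= hR removed_cat => hr; exists k, R.
Qed.

Lemma rem_inI (T : eqType) (Q C : seq (seq T)) r k R : size C = size Q ->
  k < size Q -> nth [::] Q k = R ++ nth [::] C k -> r \in R -> rem_in Q C r.
Proof.
move=> hs hk hR hr; apply/hasP; exists (nth [::] Q k, nth [::] C k).
  by rewrite -nth_zip // mem_nth // size_zip hs minnn.
by rewrite /= hR removed_cat.
Qed.

Lemma in_flattenQ (T : eqType) (Q : seq (seq T)) k b :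
  k < size Q -> b \in nth [::] Q k -> b \in flatten Q.
Proof. by move=> hk hb; apply/flattenP; exists (nth [::] Q k); rewrite ?mem_nth. Qed.

Lemma flatten_sub (T : eqType) (Q C : seq (seq T)) w : cfg Q C ->
  w \in flatten C -> w \in flatten Q.
Proof.
move=> [hs hc] /flattenP [c hcC hw].
have hk : index c C < size Q by rewrite -hs index_mem.
have [R hR] := hc _ hk.
apply: (in_flattenQ hk); rewrite hR mem_cat nth_index // hw orbT //.
Qed.

Lemma rem_sub (T : eqType) (Q C : seq (seq T)) r : cfg Q C ->
  rem_in Q C r -> r \in flatten Q.
Proof.
move=> hc /(rem_inP hc) [k [R [hk hR hr]]].
by apply: (in_flattenQ hk); rewrite hR mem_cat hr.
Qed.

Lemma in_plts (T : eqType) (plt : T -> nat) (Q : seq (seq T)) b :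
  b \in flatten Q -> plt b \in plts plt Q.
Proof. by move=> hb; rewrite /plts mem_undup map_f. Qed.

Lemma op_rem (T : eqType) (plt : T -> nat) (Q C : seq (seq T)) t :
  open_pallet plt Q C t ->
  (exists2 b, b \in flatten C & plt b = t) /\
  (exists2 r, rem_in Q C r & plt r = t).
Proof.
rewrite /open_pallet => /andP [/hasP [q hq /hasP [b hb /eqP hbt]]
                              /hasP [qq hqq /hasP [r hr /eqP hrt]]].
split; first by exists b => //; apply/flattenP; exists q.
by exists r => //; apply/hasP; exists qq.
Qed.

Lemma good_cfg (T : eqType) (plt : T -> nat) (Q C : seq (seq T)) X p E :
  dir_path_decomp (plts plt Q) E X -> dpd_width X = p.-1 -> 0 < p ->
  cfg Q C -> INV plt X Q C -> size (open_pallets plt Q C) <= p.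
Proof.
move=> [h1 h2 h3 h4] hwd hp hc hinv.
case: (eqVneq (flatten C) [::]) => hC.
  case e: (open_pallets plt Q C) => [//|t s].
  have : t \in open_pallets plt Q C by rewrite e inE eqxx.
  by rewrite mem_filter => /andP [/op_rem [[b]]]; rewrite hC.
have [w hw hmin] := min_exists (fun b => lidx X (plt b)) hC.
set i := lidx X (plt w).
have hwV := in_plts plt (flatten_sub hc hw).
have [j0 hj0 hwj0] := h2 _ hwV.
have [hi _] := lidx_mem hj0 hwj0.
have key t : t \in open_pallets plt Q C -> t \in undup (nth [::] X i).
  rewrite mem_filter => /andP [/op_rem [[b hb hbt] [r hr hrt]] hV].
  have [i0 hi0 ht0] := h2 t hV.
  have [ha1 ha2] := aidx_mem hi0 ht0; have [hl1 hl2] := lidx_mem hi0 ht0.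
  have e1 : aidx X t <= i by rewrite -hrt; apply: hinv.
  have e2 : i <= lidx X t by rewrite -hbt; apply: hmin.
  rewrite mem_undup; exact: (h4 t _ _ _ e1 e2 hl1 ha2 hl2).
have s1 := uniq_leq_size (filter_uniq _ (undup_uniq _)) key.
have s2 : size (undup (nth [::] X i)) <= \max_(B <- X) size (undup B).
  by apply: (@leq_bigmax_seq _ X xpredT (fun B : seq nat => size (undup B))) => //; rewrite mem_nth.
move: hwd; rewrite /dpd_width => hwd.
apply: (leq_trans s1); apply: (leq_trans s2).
move: hwd; case: (\max_(B <- X) size (undup B)) => [//|m] /= ->.
by rewrite prednK.
Qed.

Lemma flatten_set_sub (T : eqType) (C : seq (seq T)) j x rest w :
  nth [::] C j = x :: rest ->
  w \in flatten (set_nth [::] C j rest) -> w \in flatten C.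
Proof.
elim: C j => [|c C IH] [|j] /=; rewrite ?mem_cat //.
- by move=> -> /orP [h|->]; rewrite ?inE ?h ?orbT.
- by move=> hn /orP [->|/(IH _ hn) ->] //; rewrite orbT.
Qed.

Lemma step_lemma (T : eqType) (plt : T -> nat) (Q C : seq (seq T)) X
  (h2 : forall v, v \in plts plt Q -> exists2 i, i < size X & v \in nth [::] X i)
  (h3 : forall u v, u \in plts plt Q -> v \in plts plt Q -> sg_arc plt Q u v ->
         exists i j, [/\ i <= j, j < size X, u \in nth [::] X i
                       & v \in nth [::] X j]) :
  cfg Q C -> INV plt X Q C -> flatten C != [::] ->
  exists C', [/\ step C C', cfg Q C', INV plt X Q C' &
                 size (flatten C') < size (flatten C)].
Proof.
move=> hc hinv hC.
have [w hw hmin] := min_exists (fun b => lidx X (plt b)) hC.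
have [c hcC hwc] := flattenP hw.
have hj : index c C < size C by rewrite index_mem.
have hcj : nth [::] C (index c C) = c by rewrite nth_index.
move: (index c C) hj hcj => j hj hcj.
case: c hcC hwc hcj => [//|x rest] hcC hwc hcj.
have [hs hcf] := hc.
have hjQ : j < size Q by rewrite -hs.
have [R hR] := hcf j hjQ; rewrite hcj in hR.
set C' := set_nth [::] C j rest.
have hs' : size C' = size C by rewrite size_set_nth; apply/maxn_idPr.
have hn' k : nth [::] C' k = if k == j then rest else nth [::] C k.
  by rewrite nth_set_nth.
have hc' : cfg Q C'.
  split; first by rewrite hs'.
  move=> k hk; rewrite hn'; case: eqP => [->|_]; last exact: hcf.
  by exists (R ++ [:: x]); rewrite hR -catA.
have hxQ : x \in flatten Q by apply: (in_flattenQ hjQ); rewrite hR mem_cat inE eqxx orbT.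
have hxV := in_plts plt hxQ.
have hwV := in_plts plt (flatten_sub hc hw).
have key : aidx X (plt x) <= lidx X (plt w).
  case: (eqVneq (plt x) (plt w)) => e.
    have [i0 hi0 ht0] := h2 _ hxV.
    apply: (@leq_trans i0); first exact: aidx_le.
    by rewrite -e; apply: lidx_ge.
  have hwr : w \in rest.
    by move: hwc; rewrite inE => /orP [/eqP hh|//]; rewrite hh eqxx in e.
  have harc : sg_arc plt Q (plt x) (plt w).
    rewrite /sg_arc e andTb; apply/hasP; exists (nth [::] Q j); first exact: mem_nth.
    apply/hasP; exists (size (R ++ [:: x])).
      rewrite mem_iota hR; rewrite !size_cat /=; lia.
    rewrite hR -(cat1s x rest) catA take_size_cat // drop_size_cat //.
    by rewrite map_f ?map_f // mem_cat inE eqxx orbT.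
  have [i [j' [hij hj' hxi hwj]]] := h3 _ _ hxV hwV harc.
  apply: (@leq_trans i); first by apply: aidx_le => //; apply: leq_ltn_trans hj'.
  by apply: (leq_trans hij); apply: lidx_ge.
exists C'; split => //.
- rewrite /step; apply/hasP; exists j; first by rewrite mem_iota.
  by rewrite hcj /= eqxx.
- move=> r w' hr hw'.
  have hw'C : w' \in flatten C by apply: (flatten_set_sub hcj).
  have [k [R' [hk hR' hr']]] := rem_inP hc' hr.
  move: hR'; rewrite hn'; case: eqP => [->|nk] hR'.
    have e : R' = R ++ [:: x].
      by rewrite -(removed_cat R' rest) -hR' hR -(cat1s x rest) catA removed_cat.
    move: hr'; rewrite e mem_cat inE => /orP [hrR|/eqP ->].
      by apply: hinv => //; apply: (rem_inI hs hjQ _ hrR); rewrite hcj.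
    by apply: (leq_trans key); apply: hmin.
  by apply: hinv => //; apply: (rem_inI hs hk hR' hr').
- by rewrite -(flatten_set_nth hj hcj).
Qed.

Lemma main_ind (T : eqType) (plt : T -> nat) (Q : seq (seq T)) X
  (h2 : forall v, v \in plts plt Q -> exists2 i, i < size X & v \in nth [::] X i)
  (h3 : forall u v, u \in plts plt Q -> v \in plts plt Q -> sg_arc plt Q u v ->
         exists i j, [/\ i <= j, j < size X, u \in nth [::] X i
                       & v \in nth [::] X j]) :
  forall n C, size (flatten C) <= n -> cfg Q C -> INV plt X Q C ->
  exists cs, [/\ path (@step T) C cs, last C cs = nseq (size Q) [::] &
     forall D, D \in C :: cs -> cfg Q D /\ INV plt X Q D].
Proof.
elim=> [|n IH] C hn hc hinv.
  exists [::]; split => //.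
    have [hs _] := hc; rewrite /= -hs; apply: flatten_nil.
    by apply/eqP; rewrite -size_eq0 -leqn0.
  by move=> D; rewrite inE => /eqP ->.
case: (eqVneq (flatten C) [::]) => hC.
  exists [::]; split => //.
    by have [hs _] := hc; rewrite /= -hs; apply: flatten_nil.
  by move=> D; rewrite inE => /eqP ->.
have [C' [hst hc' hinv' hlt]] := step_lemma h2 h3 hc hinv hC.
have hn' : size (flatten C') <= n by rewrite -ltnS; exact: leq_trans hlt hn.
have [cs [hp hl hD]] := IH C' hn' hc' hinv'.
exists (C' :: cs); split => //=; first by rewrite hst.
by move=> D; rewrite inE => /orP [/eqP ->|/hD].
Qed.

Theorem theorem2 (T : eqType) (plt : T -> nat) (Q : seq (seq T)) (p : nat)
  (X : seq (seq nat)) :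
  instance plt Q -> 0 < p ->
  dir_path_decomp (plts plt Q) (sg_arc plt Q) X -> dpd_width X = p.-1 ->
  exists cs : seq (seq (seq T)),
    processing Q cs /\
    all (fun C => size (open_pallets plt Q C) <= p) (Q :: cs).
Proof.
move=> _ hp hX hw.
have [h1 h2 h3 h4] := hX.
have hc0 : cfg Q Q by split => // k _; exists [::].
have hinv0 : INV plt X Q Q.
  move=> r w hr; have [k [R [hk hR hrR]]] := rem_inP hc0 hr.
  have : size (nth [::] Q k) = size R + size (nth [::] Q k) by rewrite {1}hR size_cat.
  move/eqP; rewrite -{1}[size (nth [::] Q k)]add0n eqn_add2r eq_sym size_eq0 => /eqP hR0.
  by rewrite hR0 in hrR.
have [cs [hpath hl hD]] := main_ind h2 h3 (leqnn _) hc0 hinv0.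
exists cs; split; first by rewrite /processing hpath hl eqxx.
apply/allP => D hDin; have [hcD hiD] := hD D hDin.
exact: (good_cfg hX hw hp hcD hiD).
Qed.
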